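(* For all integers $u,v\ge1$, with $u!=(u,u-1,\ldots,2,1)$ ($0!=\emptyset$) and all universal characters evaluated at $(x,y)$, $$S_{[(u+1)!,(v+1)!]}S_{[(u-1)!,(v-1)!]}-S_{[(u+1)!,(v-1)!]}S_{[(u-1)!,(v+1)!]}+S_{[u!,v!]}^2=0,$$ $$S_{[(u+1)!,(v-1)!]}S_{[(u-1)!,(v+1)!]}-S_{[u!,(v+2,v-1,\ldots,1)]}S_{[(u+2,u-1,\ldots,1),v!]}+S_{[(u+2,u-1,\ldots,1),(v+2,v-1,\ldots,1)]}S_{[u!,v!]}=0.$$
   Context: For $x=(x_1,x_2,\dots)$ define $p_k(x)$ by $\sum_{k\ge0}p_k(x)z^k=\exp(\sum_{k\ge1}x_kz^k)$ and $p_{-k}=0$ for $k>0$; $q_k(y)$ is the same with $y=(y_1,y_2,\dots)$ in place of $x$. For partitions $\lambda=(\lambda_1,\dots,\lambda_l)$, $\mu=(\mu_1,\dots,\mu_{l'})$, the universal character is $S_{[\lambda,\mu]}(x,y)=\det(a_{ij})_{1\le i,j\le l+l'}$ with $a_{ij}=q_{\mu_{l'-i+1}+i-j}(y)$ for $1\le i\le l'$ and $a_{ij}=p_{\lambda_{i-l'}-i+j}(x)$ for $l'+1\le i\le l+l'$. *)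

(* Defs.v *)
From HB Require Import structures.
From mathcomp Require Import all_boot all_order all_algebra.
Set Implicit Arguments. Unset Strict Implicit. Unset Printing Implicit Defensive.
Import Order.TTheory GRing.Theory Num.Theory.
Local Open Scope ring_scope.

(* p_k(x) = coefficient of z^k in exp(sum_{k>=1} x_k z^k).  Only x_1..x_k
   contribute to this coefficient, so we truncate the inner series at
   degree k and the exponential series at n = k (higher powers of a series
   without constant term have no z^k coefficient). x 0 is unused. *)
Definition schur_p (R : fieldType) (x : nat -> R) (k : nat) : R :=
  let f : {poly R} := \sum_(1 <= i < k.+1) x i *: 'X^i in
  \sum_(0 <= n < k.+1) (n`!%:R)^-1 * (f ^+ n)`_k.

Definition schur_pz (R : fieldType) (x : nat -> R) (k : int) : R :=
  match k with
  | Posz n => schur_p x n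
  | Negz _ => 0
  end.

(* Universal character S_[lam, mu](x, y), partitions given as
   weakly decreasing seq nat (lam = (lam_1,...,lam_l)).  The matrix is
   written with 0-based indices i, j < l + l'. *)
Definition univ_char (R : fieldType) (lam mu : seq nat) (x y : nat -> R) : R :=
  let l' := size mu in
  \det (\matrix_(i < size lam + l', j < size lam + l')
    if (i < l')%N then
      schur_pz y ((nth 0%N mu (l' - 1 - i))%:Z + (i%:Z) - (j%:Z))
    else
      schur_pz x ((nth 0%N lam (i - l'))%:Z - (i%:Z) + (j%:Z))).

Definition stair (u : nat) : seq nat := rev (iota 1 u).

Definition stair2 (u : nat) : seq nat := u.+2 :: stair u.-1.

(* Main.v *)
Require Import Defs.
From HB Require Import structures.
From mathcomp Require Import all_boot all_order all_algebra.
From mathcomp Require Import ring lra zify.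
Set Implicit Arguments. Unset Strict Implicit. Unset Printing Implicit Defensive.
Import Order.TTheory GRing.Theory Num.Theory.
Local Open Scope ring_scope.

Lemma jac_core (R : comRingType) n (A : 'M[R]_(2+n)) :
  \det A * \det (ulsubmx (\adj A)) = \det A ^+ 2 * \det (drsubmx A).
Proof.
have hA := mul_mx_adj A.
move: hA; rewrite -{1}[A]submxK -[\adj A]submxK mulmx_block (scalar_mx_block 2 n).
case/eq_block_mx => h1 _ h3 _.
have hB : A *m block_mx (ulsubmx (\adj A)) 0 (dlsubmx (\adj A)) 1%:M
   = block_mx (\det A)%:M (ursubmx A) 0 (drsubmx A).
  by rewrite -{1}[A]submxK mulmx_block h1 h3 !mulmx0 !mulmx1 !add0r.
have := congr1 determinant hB.
rewrite det_mulmx det_lblock det1 mulr1 det_ublock det_scalar.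
by rewrite submxK.
Qed.


Lemma det2 (R : comRingType) (M : 'M[R]_2) : \det M = M 0 0 * M 1 1 - M 0 1 * M 1 0.
Proof.
rewrite (expand_det_row _ 0) !big_ord_recl big_ord0 /cofactor !det_mx11 !mxE /=.
rewrite addr0 /= expr0 expr1 !mul1r mulN1r mulrN.
have e1 : lift (0 : 'I_2) 0 = 1 by apply: val_inj.
have e2 : lift (lift (ord0 : 'I_2) ord0) 0 = 0 by apply: val_inj.
have e3 : lift (ord0 : 'I_2) ord0 = 1 by apply: val_inj.
have e4 : lift (1 : 'I_2) 0 = 0 by apply: val_inj.
by rewrite e1 e4.
Qed.

Definition mnr (R : comRingType) n (A : 'M[R]_n.+2) (r c : 'I_n.+2) :=
  \det (row' r (col' c A)).
Definition mnr2 (R : comRingType) n (A : 'M[R]_n.+2) :=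
  \det (\matrix_(i < n, j < n) A (lift 0 (lift 0 i)) (lift 0 (lift 0 j))).

Lemma jac_eq (R : comRingType) n (A : 'M[R]_n.+2) :
  \det A * (mnr A 0 0 * mnr A 1 1 - mnr A 0 1 * mnr A 1 0)
  = \det A ^+ 2 * mnr2 A.
Proof.
have := jac_core A; rewrite det2 !mxE /cofactor.
have -> : \det (drsubmx (A : 'M_(2+n))) = mnr2 A.
  congr (\det _); apply/matrixP => i j; rewrite !mxE; congr (A _ _); exact: val_inj.
move=> <-; congr (_ * _).
have l0 : lshift n (0 : 'I_2) = 0 :> 'I_(n.+2) by apply: val_inj.
have l1 : lshift n (1 : 'I_2) = 1 :> 'I_(n.+2) by apply: val_inj.
rewrite l0 l1 /mnr /=.
have s : (1 %% n.+2 = 1)%N by rewrite modn_small.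
rewrite s add0n addn0 exprD expr1 expr0; ring.
Qed.

Lemma mnr_map (R S : comRingType) (f : {rmorphism R -> S}) n (A : 'M[R]_n.+2) r c :
  mnr (map_mx f A) r c = f (mnr A r c).
Proof. by rewrite /mnr -det_map_mx; congr (\det _); apply/matrixP => i j; rewrite !mxE. Qed.

Lemma mnr2_map (R S : comRingType) (f : {rmorphism R -> S}) n (A : 'M[R]_n.+2) :
  mnr2 (map_mx f A) = f (mnr2 A).
Proof. by rewrite /mnr2 -det_map_mx; congr (\det _); apply/matrixP => i j; rewrite !mxE. Qed.

Lemma jac (F : fieldType) n (A : 'M[F]_n.+2) :
  \det A * mnr2 A = mnr A 0 0 * mnr A 1 1 - mnr A 0 1 * mnr A 1 0.
Proof.
set P := char_poly_mx (- A).
have hP : \det P != 0 := monic_neq0 (char_poly_monic (-A)).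
have eP := jac_eq P.
rewrite expr2 -mulrA in eP; have {}eP := mulfI hP eP.
have hmap : map_mx (horner_eval 0) P = A.
  apply/matrixP=> i j; rewrite !mxE /horner_eval.
  by rewrite hornerD hornerN hornerC hornerMn hornerX mul0rn sub0r opprK.
rewrite -hmap det_map_mx mnr2_map !mnr_map -!rmorphM -rmorphB eP.
by rewrite rmorphM.
Qed.
Lemma sgsq (R : comRingType) k : (-1) ^+ k * (-1) ^+ k = 1 :> R.
Proof. by rewrite -expr2 sqrr_sign. Qed.

Lemma det_mv (R : comRingType) n (A B : 'M[R]_n.+1) (i : 'I_n.+1) :
  (forall j, B 0 j = A i j) -> (forall k j, B (lift 0 k) j = A (lift i k) j) ->
  \det B = (-1) ^+ i * \det A.
Proof.
move=> h0 h1.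
rewrite (expand_det_row B 0) (expand_det_row A i) big_distrr; apply: eq_bigr => j _.
rewrite h0 /cofactor.
have -> : row' 0 (col' j B) = row' i (col' j A).
  by apply/matrixP => k l; rewrite !mxE h1.
rewrite /= add0n exprD.
transitivity (A i j * (((-1)^+i * (-1)^+i) * (-1)^+j * \det (row' i (col' j A)))).
  by rewrite sgsq mul1r.
ring.
Qed.

Lemma det_mvc (R : comRingType) n (A B : 'M[R]_n.+1) (i : 'I_n.+1) :
  (forall k, B k 0 = A k i) -> (forall k j, B k (lift 0 j) = A k (lift i j)) ->
  \det B = (-1) ^+ i * \det A.
Proof.
move=> h0 h1; rewrite -det_tr -[\det A]det_tr; apply: det_mv => *; rewrite !mxE //.
Qed.

Lemma nth_lift1 (T : Type) (x0 a b : T) s n (i : 'I_n.+1) :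
  nth x0 (a :: b :: s) (lift (1 : 'I_n.+2) i) = nth x0 (a :: s) i.
Proof.
rewrite /= /bump.
have -> : (1 %% n.+2 = 1)%N by rewrite modn_small.
by case: i => [[|k] hk].
Qed.

Section Dt.
Variable R : fieldType.
Notation z0 := (fun _ : nat => (0 : R)).

Definition Dt (rs : seq (nat -> R)) (cs : seq nat) : R :=
  \det (\matrix_(i < size cs, j < size cs) (nth z0 rs i) (nth 0%N cs j)).

Lemma Dt_mat rs cs m (E : nat -> nat -> R) : size cs = m ->
  (forall i j, (i < m)%N -> (j < m)%N -> nth z0 rs i (nth 0%N cs j) = E i j) ->
  Dt rs cs = \det (\matrix_(i < m, j < m) E i j).
Proof.
move=> hs h; rewrite /Dt; move: h; case: m / hs => h.
by congr (\det _); apply/matrixP => i j; rewrite !mxE h.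
Qed.

Lemma Dt_mvr F f G cs : size cs = (size F + size G).+1 ->
  Dt (F ++ f :: G) cs = (-1) ^+ (size F) * Dt (f :: F ++ G) cs.
Proof.
case: cs => [//|c cs] /= [hs].
have hi : (size F < (size cs).+1)%N by lia.
rewrite /Dt (det_mv (i := Ordinal hi) (A := \matrix_(i < (size cs).+1, j < (size cs).+1) (nth z0 (F ++ f :: G) i) (nth 0%N (c :: cs) j))
  (B := \matrix_(i < (size cs).+1, j < (size cs).+1) (nth z0 (f :: F ++ G) i) (nth 0%N (c :: cs) j))).
- by rewrite /= mulrA sgsq mul1r.
- by move=> j; rewrite !mxE /= nth_cat ltnn subnn.
- move=> k j; rewrite !mxE /= /bump add0n.
  case: (leqP (size F) k) => hk.
  + rewrite add1n !nth_cat ltnNge hk /= ltnNge (leqW hk) /= subSn //.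
  + by rewrite add0n !nth_cat hk.
Qed.


Lemma Dt_mvc rs F c G :
  Dt rs (F ++ c :: G) = (-1) ^+ (size F) * Dt rs (c :: F ++ G).
Proof.
set n := (size F + size G)%N.
rewrite (@Dt_mat rs (F ++ c :: G) n.+1 (fun i j => nth z0 rs i (nth 0%N (F ++ c :: G) j))); last 2 first.
- by rewrite size_cat /= addnS.
- by [].
rewrite (@Dt_mat rs (c :: F ++ G) n.+1 (fun i j => nth z0 rs i (nth 0%N (c :: F ++ G) j))); last 2 first.
- by rewrite /= size_cat.
- by [].
have hi : (size F < n.+1)%N by rewrite /n; lia.
rewrite (det_mvc (i := Ordinal hi) (A := \matrix_(i < n.+1, j < n.+1) nth z0 rs i (nth 0%N (F ++ c :: G) j))
  (B := \matrix_(i < n.+1, j < n.+1) nth z0 rs i (nth 0%N (c :: F ++ G) j))).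
- by rewrite /= mulrA sgsq mul1r.
- by move=> j; rewrite !mxE /= nth_cat ltnn subnn.
- move=> k j; rewrite !mxE /= /bump add0n.
  case: (leqP (size F) j) => hk.
  + rewrite add1n !nth_cat ltnNge hk /= ltnNge (leqW hk) /= subSn //.
  + by rewrite add0n !nth_cat hk.
Qed.

Lemma Dt_unitr f rs c cs : (forall c', c' \in cs -> f c' = 0) ->
  Dt (f :: rs) (c :: cs) = f c * Dt rs cs.
Proof.
move=> h; rewrite /Dt (expand_det_row _ 0) big_ord_recl big1 ?addr0.
- rewrite !mxE /cofactor /= expr0 mul1r; congr (_ * \det _).
  by apply/matrixP => i j; rewrite !mxE.
- by move=> j _; rewrite !mxE lift0 /= h ?mul0r // mem_nth.
Qed.

Lemma Dt_unitc f rs c cs : (forall i, (i < size cs)%N -> nth z0 rs i c = 0) ->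
  Dt (f :: rs) (c :: cs) = f c * Dt rs cs.
Proof.
move=> h; rewrite /Dt (expand_det_col _ 0) big_ord_recl big1 ?addr0.
- rewrite !mxE /cofactor /= expr0 mul1r; congr (_ * \det _).
  by apply/matrixP => i j; rewrite !mxE.
- by move=> j _; rewrite !mxE lift0 /= h ?mul0r.
Qed.


Lemma Dt_jac r1 r2 rs c1 c2 cs :
  Dt (r1 :: r2 :: rs) (c1 :: c2 :: cs) * Dt rs cs =
  Dt (r2 :: rs) (c2 :: cs) * Dt (r1 :: rs) (c1 :: cs)
  - Dt (r2 :: rs) (c1 :: cs) * Dt (r1 :: rs) (c2 :: cs).
Proof.
set A := \matrix_(i < (size cs).+2, j < (size cs).+2) nth z0 (r1 :: r2 :: rs) i (nth 0%N (c1 :: c2 :: cs) j).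
have h := jac A; rewrite /mnr /mnr2 in h.
rewrite /Dt -/A; apply: etrans (etrans _ h) _.
- congr (_ * \det _); apply/matrixP => i j; rewrite !mxE ?lift0 //.
- congr (_ * _ - _ * _); congr (\det _); apply/matrixP => i j; rewrite /A !mxE ?lift0 ?nth_lift1 //.
Qed.


Lemma Dt_mvr2 F r1 r2 G cs : size cs = (size F + size G).+2 ->
  Dt (F ++ r1 :: r2 :: G) cs = Dt (r1 :: r2 :: F ++ G) cs.
Proof.
move=> hs.
have -> : F ++ r1 :: r2 :: G = (F ++ [:: r1]) ++ r2 :: G by rewrite -catA.
rewrite Dt_mvr; last by rewrite size_cat /= hs; lia.
have -> : r2 :: (F ++ [:: r1]) ++ G = (r2 :: F) ++ r1 :: G by rewrite -catA.
rewrite Dt_mvr; last by rewrite /= hs; lia.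
by rewrite size_cat /= addn1 mulrA sgsq mul1r.
Qed.

Lemma Dt_mvlast rs cs c : Dt rs (cs ++ [:: c]) = (-1) ^+ (size cs) * Dt rs (c :: cs).
Proof. by rewrite Dt_mvc cats0. Qed.

Lemma Dt_jac2 F r1 r2 G c1 c2 cs : size cs = (size F + size G)%N ->
  Dt (F ++ r1 :: r2 :: G) (c1 :: cs ++ [:: c2]) * Dt (F ++ G) cs =
  Dt (F ++ r2 :: G) (cs ++ [:: c2]) * Dt (F ++ r1 :: G) (c1 :: cs)
  - Dt (F ++ r2 :: G) (c1 :: cs) * Dt (F ++ r1 :: G) (cs ++ [:: c2]).
Proof.
move=> hs.
rewrite Dt_mvr2; last by rewrite /= size_cat /= hs; lia.
rewrite !(Dt_mvr (F:=F)); try by rewrite /= ?size_cat /= hs.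
have -> : c1 :: cs ++ [:: c2] = (c1 :: cs) ++ [:: c2] by [].
rewrite !Dt_mvlast /= exprS mulN1r mulNr -mulrA.
rewrite mulNr -mulrA (Dt_jac r1 r2 (F ++ G) c2 c1 cs).
rewrite -[LHS]mul1r -{1}(sgsq R (size F)).
move: ((-1) ^+ size F) ((-1) ^+ size cs) => a b; ring.
all: by rewrite size_cat /= hs addn1.
Qed.

Lemma Dt_unitlast rs f cs c : size rs = size cs -> (forall c', c' \in cs -> f c' = 0) ->
  Dt (rs ++ [:: f]) (cs ++ [:: c]) = f c * Dt rs cs.
Proof.
move=> hs h; rewrite Dt_mvlast Dt_mvr; last by rewrite /= hs addn0.
by rewrite cats0 Dt_unitr // hs mulrA sgsq mul1r.
Qed.

Definition ext (e0 e1 : R) (f : nat -> R) : nat -> R :=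
  fun c => match c with 0 => e0 | 1 => e1 | c'.+2 => f c' end.

Lemma nth_ext_sh a b s k c : nth z0 (map (ext a b) s) k c.+2 = nth z0 s k c.
Proof. by elim: s k => [|r s IH] [|k] //=. Qed.

Lemma nth_ext0 s k c : (c < 2)%N -> nth z0 (map (ext 0 0) s) k c = 0.
Proof. by case: c => [|[|c]] // _; elim: s k => [|r s IH] [|k] //=. Qed.

Lemma Dt_sh2 rs1 rs2 cs :
  (forall i c, nth z0 rs1 i c.+2 = nth z0 rs2 i c) ->
  Dt rs1 (map (fun c => c.+2) cs) = Dt rs2 cs.
Proof.
move=> h; rewrite (@Dt_mat _ _ (size cs) (fun i j => nth z0 rs2 i (nth 0%N cs j))) ?size_map //.
by move=> i j _ hj; rewrite (nth_map 0%N) // h.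
Qed.

Lemma Dt_pl0 f1 f2 f3 f4 FF cs : size cs = (size FF).+2 ->
  Dt (f1 :: f2 :: FF) cs * Dt (f3 :: f4 :: FF) cs
  - Dt (f1 :: f3 :: FF) cs * Dt (f2 :: f4 :: FF) cs
  + Dt (f1 :: f4 :: FF) cs * Dt (f2 :: f3 :: FF) cs = 0.
Proof.
move=> hs.
set g1 := ext 0 0 f1; set g2 := ext 0 0 f2; set g3 := ext 1 0 f3; set g4 := ext 0 1 f4.
set FF' := map (ext 0 0) FF; set cs' := map (fun c => c.+2) cs.
have hs' : size cs' = (size FF).+2 by rewrite size_map.
have J := Dt_jac g1 g2 (g3 :: g4 :: FF') 0 1 cs'.
have E : forall a b a' b', (forall c, a c.+2 = a' c) -> (forall c, b c.+2 = b' c) ->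
    Dt (a :: b :: FF') cs' = Dt (a' :: b' :: FF) cs.
  move=> a b a' b' ha hb; apply: Dt_sh2 => -[|[|i]] c //=; exact: nth_ext_sh.
have Z : forall (l : seq (nat -> R)) c, (c < 2)%N -> all (fun r => r c == 0) l ->
    forall i, nth z0 (l ++ FF') i c = 0.
  move=> l c hc hl i; elim: l i hl => [|r l IH] [|i] /=.
  - by rewrite nth_ext0.
  - by rewrite nth_ext0.
  - by case/andP => /eqP.
  - by case/andP => _ /IH.
have sg2 : (-1) ^+ 2 = 1 :> R by rewrite -signr_odd.
have hsF : size FF' = size FF by rewrite size_map.
have e1 : Dt [:: g1, g2, g3, g4 & FF'] [:: 0%N, 1%N & cs'] = Dt [:: f1, f2 & FF] cs.
  rewrite (Dt_mvr (F := [:: g1; g2]) g3 (G := g4 :: FF')) /=; last by rewrite hs' hsF; lia.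
  rewrite Dt_unitc; last by move=> i _; rewrite -[[:: g1, g2, g4 & FF']]/([:: g1; g2; g4] ++ FF'); apply: Z => //=; rewrite ?eqxx.
  rewrite (Dt_mvr (F := [:: g1; g2]) g4 (G := FF')) /=; last by rewrite hs' hsF; lia.
  rewrite Dt_unitc; last by move=> i _; rewrite -[[:: g1, g2 & FF']]/([:: g1; g2] ++ FF'); apply: Z => //=; rewrite ?eqxx.
  by rewrite sg2 !mul1r; apply: E.
have e2 : Dt [:: g2, g3, g4 & FF'] (1%N :: cs') = Dt [:: f2, f3 & FF] cs.
  rewrite (Dt_mvr (F := [:: g2; g3]) g4 (G := FF')) /=; last by rewrite hs' hsF; lia.
  rewrite Dt_unitc; last by move=> i _; rewrite -[[:: g2, g3 & FF']]/([:: g2; g3] ++ FF'); apply: Z => //=; rewrite ?eqxx.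
  by rewrite sg2 !mul1r; apply: E.
have e3 : Dt [:: g1, g3, g4 & FF'] (0%N :: cs') = - Dt [:: f1, f4 & FF] cs.
  rewrite (Dt_mvr (F := [:: g1]) g3 (G := g4 :: FF')) /=; last by rewrite hs' hsF; lia.
  rewrite Dt_unitc; last by move=> i _; rewrite -[[:: g1, g4 & FF']]/([:: g1; g4] ++ FF'); apply: Z => //=; rewrite ?eqxx.
  by rewrite expr1 mulN1r mul1r; congr (- _); apply: E.
have e4 : Dt [:: g2, g3, g4 & FF'] (0%N :: cs') = - Dt [:: f2, f4 & FF] cs.
  rewrite (Dt_mvr (F := [:: g2]) g3 (G := g4 :: FF')) /=; last by rewrite hs' hsF; lia.
  rewrite Dt_unitc; last by move=> i _; rewrite -[[:: g2, g4 & FF']]/([:: g2; g4] ++ FF'); apply: Z => //=; rewrite ?eqxx.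
  by rewrite expr1 mulN1r mul1r; congr (- _); apply: E.
have e5 : Dt [:: g1, g3, g4 & FF'] (1%N :: cs') = Dt [:: f1, f3 & FF] cs.
  rewrite (Dt_mvr (F := [:: g1; g3]) g4 (G := FF')) /=; last by rewrite hs' hsF; lia.
  rewrite Dt_unitc; last by move=> i _; rewrite -[[:: g1, g3 & FF']]/([:: g1; g3] ++ FF'); apply: Z => //=; rewrite ?eqxx.
  by rewrite sg2 !mul1r; apply: E.
have e6 : Dt [:: g3, g4 & FF'] cs' = Dt [:: f3, f4 & FF] cs by apply: E.
rewrite e1 e2 e3 e4 e5 e6 in J.
rewrite J; ring.
Qed.

End Dt.

Section Concrete.
Variable R : fieldType.
Variables x y : nat -> R.
Notation z0 := (fun _ : nat => (0 : R)).

Lemma schur_pz_neg (w : nat -> R) (k : int) : (k < 0)%R -> schur_pz w k = 0.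
Proof. by case: k. Qed.

Lemma schur_pz0 (w : nat -> R) : schur_pz w 0 = 1.
Proof.
rewrite /= /schur_p big_nat1 expr0 /= invr1 mul1r.
by rewrite coef1.
Qed.

Definition Y (a : int) : nat -> R := fun c => schur_pz y (a - c%:Z).
Definition X (b : int) : nat -> R := fun c => schur_pz x (b + c%:Z).
Definition RW (A B : seq int) := map Y A ++ map X B.

Definition sy k (s : int) : seq int := [seq (2 * i)%:Z + s | i <- iota 0 k].
Definition sx k (t : int) : seq int := [seq t - (2 * i)%:Z | i <- iota 0 k].
Definition ya (mu : seq nat) : seq int :=
  [seq (nth 0%N mu (size mu - 1 - i))%:Z + i%:Z | i <- iota 0 (size mu)].
Definition xb (lam : seq nat) (l' : nat) : seq int :=
  [seq (nth 0%N lam i)%:Z - (l' + i)%:Z | i <- iota 0 (size lam)].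

Lemma nth_RW A B i : nth z0 (RW A B) i =
  if (i < size A)%N then Y (nth 0 A i) else
  if (i < size A + size B)%N then X (nth 0 B (i - size A)) else z0.
Proof.
rewrite /RW nth_cat size_map.
case: ltnP => h1; first by rewrite (nth_map 0).
case: ltnP => h2.
  have h3 : (i - size A < size B)%N by rewrite ltn_subLR.
  by rewrite (nth_map 0).
have h3 : (size B <= i - size A)%N by rewrite leq_subRL.
by rewrite nth_default // size_map.
Qed.

Lemma univ_RW lam mu : univ_char lam mu x y =
  Dt (RW (ya mu) (xb lam (size mu))) (iota 0 (size lam + size mu)).
Proof.
rewrite /univ_char; symmetry.
apply: (Dt_mat (E := fun i j => if (i < size mu)%N then
      schur_pz y ((nth 0%N mu (size mu - 1 - i))%:Z + (i%:Z) - (j%:Z))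
    else
      schur_pz x ((nth 0%N lam (i - size mu))%:Z - (i%:Z) + (j%:Z)))).
  by rewrite size_iota.
move=> i j hi hj; rewrite nth_iota // add0n nth_RW /ya /xb !size_map !size_iota.
case: ltnP => h1.
  by rewrite (nth_map 0%N) ?size_iota // nth_iota.
rewrite ifT; last by lia.
rewrite (nth_map 0%N) ?size_iota; last by lia.
rewrite nth_iota; last by lia.
rewrite /X add0n; congr (schur_pz x _); lia.
Qed.


Lemma size_sy k s : size (sy k s) = k. Proof. by rewrite size_map size_iota. Qed.
Lemma size_sx k s : size (sx k s) = k. Proof. by rewrite size_map size_iota. Qed.

Lemma syS k s : sy k.+1 s = rcons (sy k s) ((2 * k)%:Z + s).
Proof. by rewrite /sy -[k.+1]addn1 iotaD map_cat cats1 add0n. Qed.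

Lemma syS' k s : sy k.+1 s = s :: sy k (s + 2).
Proof.
rewrite /sy /= add0r; congr (_ :: _).
rewrite -[1%N]/(1 + 0)%N iotaDl -map_comp; apply: eq_map => i /=; lia.
Qed.

Lemma sxS k t : sx k.+1 t = t :: sx k (t - 2).
Proof.
rewrite /sx /= subr0; congr (_ :: _).
rewrite -[1%N]/(1 + 0)%N iotaDl -map_comp; apply: eq_map => i /=; lia.
Qed.

Lemma sxS' k t : sx k.+1 t = sx k t ++ [:: t - (2 * k)%:Z].
Proof. by rewrite /sx -[k.+1]addn1 iotaD map_cat add0n. Qed.

Lemma Dt_eqi rs1 rs2 m1 m2 n :
  (forall i j, (i < n)%N -> (j < n)%N -> nth z0 rs1 i (m1 + j) = nth z0 rs2 i (m2 + j)) ->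
  Dt rs1 (iota m1 n) = Dt rs2 (iota m2 n).
Proof.
move=> h.
rewrite (@Dt_mat _ _ _ n (fun i j => nth z0 rs2 i (m2 + j))) ?size_iota //; last first.
  by move=> i j hi hj; rewrite nth_iota // h.
rewrite (@Dt_mat _ _ _ n (fun i j => nth z0 rs2 i (m2 + j))) ?size_iota //.
by move=> i j hi hj; rewrite nth_iota.
Qed.

Lemma Dt_shift k s l t m n :
  Dt (RW (sy k s) (sx l t)) (iota m n) = Dt (RW (sy k (s - m%:Z)) (sx l (t + m%:Z))) (iota 0 n).
Proof.
apply: Dt_eqi => i j hi hj; rewrite !nth_RW !size_sy !size_sx.
case: ltnP => h1.
  rewrite /sy !(nth_map 0%N) ?size_iota // nth_iota // /Y.
  congr (schur_pz y _); lia.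
case: ltnP => h2 //.
rewrite /sx !(nth_map 0%N) ?size_iota; try lia.
rewrite nth_iota; last by lia.
rewrite /X; congr (schur_pz x _); lia.
Qed.

Lemma Dt_front a A B m n : a = m%:Z ->
  Dt (RW (a :: A) B) (iota m n.+1) = Dt (RW A B) (iota m.+1 n).
Proof.
move=> ->; rewrite -[RW _ B]/(Y m%:Z :: RW A B) [iota m n.+1]/=.
rewrite Dt_unitr; first by rewrite /Y subrr schur_pz0 mul1r.
move=> c; rewrite mem_iota => /andP[h _]; rewrite /Y schur_pz_neg //; lia.
Qed.

Lemma Dt_back A B b m n : (size A + size B = n)%N -> b + (m + n)%:Z = 0 ->
  Dt (RW A (B ++ [:: b])) (iota m n.+1) = Dt (RW A B) (iota m n).
Proof.
move=> hs hb.
have -> : RW A (B ++ [:: b]) = RW A B ++ [:: X b] by rewrite /RW map_cat catA.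
rewrite -addn1 iotaD Dt_unitlast.
- by rewrite /X hb schur_pz0 mul1r.
- by rewrite size_cat !size_map size_iota.
- move=> c; rewrite mem_iota => /andP[_ h]; rewrite /X schur_pz_neg //; lia.
Qed.

Lemma size_stair n : size (stair n) = n.
Proof. by rewrite size_rev size_iota. Qed.

Lemma nth_stair n k : (k < n)%N -> nth 0%N (stair n) k = (n - k)%N.
Proof.
move=> h; rewrite /stair nth_rev ?size_iota // nth_iota; lia.
Qed.

Lemma ya_stair n : ya (stair n) = sy n 1.
Proof.
rewrite /ya /sy size_stair; apply/eq_in_map => i; rewrite mem_iota => /andP[_ hi].
rewrite nth_stair; lia.
Qed.

Lemma xb_stair m n : xb (stair m) n = sx m (m%:Z - n%:Z).
Proof.
rewrite /xb /sx size_stair; apply/eq_in_map => i; rewrite mem_iota => /andP[_ hi].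
rewrite nth_stair; lia.
Qed.

Lemma ya_stair2 b : ya (stair2 b.+1) = rcons (sy b 1) ((2 * b)%:Z + 3).
Proof.
have hs : size (stair2 b.+1) = b.+1 by rewrite /= size_stair.
rewrite /ya hs -[b.+1]addn1 iotaD map_cat cats1 add0n /=.
rewrite !addn1 !subn1 /= subnn; congr rcons; last by rewrite /stair2 /=; lia.
apply/eq_in_map => i; rewrite mem_iota => /andP[_ hi].
have -> : (b - i = (b - i.+1).+1)%N by lia.
rewrite /stair2 /= nth_stair; lia.
Qed.

Lemma xb_stair2 a n : xb (stair2 a.+1) n = (a%:Z + 3 - n%:Z) :: sx a (a%:Z - n%:Z - 1).
Proof.
rewrite /xb /stair2 /= size_stair /sx; congr (_ :: _); first by lia.
rewrite -[1%N]/(1 + 0)%N iotaDl -map_comp; apply/eq_in_map => i; rewrite mem_iota => /andP[_ hi].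
rewrite /= nth_stair; lia.
Qed.


Lemma RW_jac A a b B c1 c2 cs : size cs = (size A + size B)%N ->
  Dt (RW (rcons A a) (b :: B)) (c1 :: cs ++ [:: c2]) * Dt (RW A B) cs =
  Dt (RW A (b :: B)) (cs ++ [:: c2]) * Dt (RW (rcons A a) B) (c1 :: cs)
  - Dt (RW A (b :: B)) (c1 :: cs) * Dt (RW (rcons A a) B) (cs ++ [:: c2]).
Proof.
move=> hs.
have e1 : RW (rcons A a) (b :: B) = map Y A ++ Y a :: X b :: map X B.
  by rewrite /RW map_rcons cat_rcons.
have e2 : RW (rcons A a) B = map Y A ++ Y a :: map X B.
  by rewrite /RW map_rcons cat_rcons.
rewrite e1 e2 /RW; apply: Dt_jac2; by rewrite !size_map.
Qed.

Lemma RW_pl A B a1 a2 b1 b2 cs : size cs = (size A + size B).+2 ->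
  Dt (RW (A ++ [:: a1; a2]) B) cs * Dt (RW A [:: b1, b2 & B]) cs
  - Dt (RW (rcons A a1) (b1 :: B)) cs * Dt (RW (rcons A a2) (b2 :: B)) cs
  + Dt (RW (rcons A a1) (b2 :: B)) cs * Dt (RW (rcons A a2) (b1 :: B)) cs = 0.
Proof.
move=> hs; rewrite /RW !map_rcons !cat_rcons map_cat -catA /=.
rewrite !Dt_mvr2 ?size_cat ?size_map //.
by apply: Dt_pl0; rewrite size_cat !size_map.
Qed.

End Concrete.

Lemma size_stair2 n : size (stair2 n.+1) = n.+1.
Proof. by rewrite /= size_stair. Qed.

Lemma iota_end1 n : iota 1 n ++ [:: n.+1] = iota 1 n.+1.
Proof. by transitivity (iota 1 (n + 1)); [rewrite iotaD add1n | rewrite addn1]. Qed.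

Lemma iota_ends n : 0%N :: iota 1 n ++ [:: n.+1] = iota 0 n.+2.
Proof. by rewrite iota_end1. Qed.

Theorem lemma4p7 (R : fieldType) (hchar : [pchar R] =i pred0)
    (x y : nat -> R) (u v : nat) (hu : (1 <= u)%N) (hv : (1 <= v)%N) :
  univ_char (stair u.+1) (stair v.+1) x y * univ_char (stair u.-1) (stair v.-1) x y
  - univ_char (stair u.+1) (stair v.-1) x y * univ_char (stair u.-1) (stair v.+1) x y
  + univ_char (stair u) (stair v) x y ^+ 2 = 0
  /\
  univ_char (stair u.+1) (stair v.-1) x y * univ_char (stair u.-1) (stair v.+1) x y
  - univ_char (stair u) (stair2 v) x y * univ_char (stair2 u) (stair v) x y
  + univ_char (stair2 u) (stair2 v) x y * univ_char (stair u) (stair v) x y = 0.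
Proof.
case: u hu => [//|a] _; case: v hv => [//|b] _.
rewrite -[a.+1.-1]/a -[b.+1.-1]/b.
rewrite !univ_RW !size_stair2 !size_stair !ya_stair !xb_stair !ya_stair2 !xb_stair2.
set q := (a%:Z - b%:Z).
have hsz : size (iota 1 (a + b + 2)) = (size (sy b.+1 1) + size (sx a.+1 (q - 2)))%N.
  by rewrite size_iota !size_sy !size_sx; lia.
have J := RW_jac x y ((2 * b.+1)%:Z + 1) q 0 (a + b + 3) hsz.
split.
  have eT1 : Dt (RW x y (rcons (sy b.+1 1) ((2 * b.+1)%:Z + 1)) (q :: sx a.+1 (q - 2)))
      (0%N :: iota 1 (a + b + 2) ++ [:: (a + b + 3)%N])
      = Dt (RW x y (sy b.+2 1) (sx a.+2 (a.+2%:Z - b.+2%:Z))) (iota 0 (a.+2 + b.+2)).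
    have -> : (a + b + 3 = (a + b + 2).+1)%N by lia.
    rewrite -syS -sxS iota_ends; congr (Dt (RW x y _ (sx _ _)) (iota _ _)); rewrite /q; lia.
  have em2 : Dt (RW x y (sy b.+1 1) (sx a.+1 (q - 2))) (iota 1 (a + b + 2))
      = Dt (RW x y (sy b 1) (sx a q)) (iota 0 (a + b)).
    rewrite syS'.
    have -> : (a + b + 2 = (a + b + 1).+1)%N by lia.
    rewrite Dt_front // sxS'.
    have -> : (a + b + 1 = (a + b).+1)%N by lia.
    rewrite Dt_back; first last.
    - rewrite /q; lia.
    - by rewrite size_sy size_sx addnC.
    rewrite Dt_shift; congr (Dt (RW x y (sy _ _) (sx _ _)) (iota _ _)); rewrite /q; lia.
  have eA : Dt (RW x y (sy b.+1 1) (q :: sx a.+1 (q - 2)))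
      (iota 1 (a + b + 2) ++ [:: (a + b + 3)%N])
      = Dt (RW x y (sy b 1) (sx a.+2 (a.+2%:Z - b%:Z))) (iota 0 (a.+2 + b)).
    have -> : (a + b + 3 = (a + b + 2).+1)%N by lia.
    rewrite -sxS iota_end1 syS' Dt_front // Dt_shift.
    congr (Dt (RW x y (sy _ _) (sx _ _)) (iota _ _)); rewrite /q; lia.
  have eB : Dt (RW x y (rcons (sy b.+1 1) ((2 * b.+1)%:Z + 1)) (sx a.+1 (q - 2)))
      (0%N :: iota 1 (a + b + 2))
      = Dt (RW x y (sy b.+2 1) (sx a (a%:Z - b.+2%:Z))) (iota 0 (a + b.+2)).
    rewrite -syS sxS' -[0%N :: _]/(iota 0 (a + b + 2).+1) Dt_back; first last.
    - rewrite /q; lia.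
    - by rewrite size_sy size_sx; lia.
    congr (Dt (RW x y (sy _ _) (sx _ _)) (iota _ _)); rewrite /q; lia.
  have eC1 : Dt (RW x y (sy b.+1 1) (q :: sx a.+1 (q - 2))) (0%N :: iota 1 (a + b + 2))
      = Dt (RW x y (sy b.+1 1) (sx a.+1 (a.+1%:Z - b.+1%:Z))) (iota 0 (a.+1 + b.+1)).
    rewrite -sxS sxS' -[0%N :: _]/(iota 0 (a + b + 2).+1) Dt_back; first last.
    - rewrite /q; lia.
    - by rewrite size_sy size_sx; lia.
    congr (Dt (RW x y (sy _ _) (sx _ _)) (iota _ _)); rewrite /q; lia.
  have eC2 : Dt (RW x y (rcons (sy b.+1 1) ((2 * b.+1)%:Z + 1)) (sx a.+1 (q - 2)))
      (iota 1 (a + b + 2) ++ [:: (a + b + 3)%N])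
      = Dt (RW x y (sy b.+1 1) (sx a.+1 (a.+1%:Z - b.+1%:Z))) (iota 0 (a.+1 + b.+1)).
    have -> : (a + b + 3 = (a + b + 2).+1)%N by lia.
    rewrite -syS iota_end1 syS' Dt_front // Dt_shift.
    congr (Dt (RW x y (sy _ _) (sx _ _)) (iota _ _)); rewrite /q; lia.
  rewrite -eT1 -em2 J eA eB eC1 eC2; ring.
have hs2 : size (iota 0 (a + b + 2)) = (size (sy b 1) + size (sx a (q - 2))).+2.
  by rewrite size_iota size_sy size_sx; lia.
have P := RW_pl x y ((2 * b)%:Z + 1) ((2 * b)%:Z + 3) (q + 2) q hs2.
have eD12 : Dt (RW x y (sy b 1 ++ [:: (2 * b)%:Z + 1; (2 * b)%:Z + 3]) (sx a (q - 2))) (iota 0 (a + b + 2))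
    = Dt (RW x y (sy b.+2 1) (sx a (a%:Z - b.+2%:Z))) (iota 0 (a + b.+2)).
  rewrite !syS -!cats1 -catA /=.
  congr (Dt (RW x y (_ ++ [:: _; _]) (sx _ _)) (iota _ _)); rewrite /q; lia.
have eD34 : Dt (RW x y (sy b 1) [:: q + 2, q & sx a (q - 2)]) (iota 0 (a + b + 2))
    = Dt (RW x y (sy b 1) (sx a.+2 (a.+2%:Z - b%:Z))) (iota 0 (a.+2 + b)).
  rewrite !sxS.
  congr (Dt (RW x y _ [:: _, _ & sx _ _]) (iota _ _)); rewrite /q; lia.
have eD13 : Dt (RW x y (rcons (sy b 1) ((2 * b)%:Z + 1)) (q + 2 :: sx a (q - 2))) (iota 0 (a + b + 2))
    = Dt (RW x y (sy b.+1 1) (a%:Z + 3 - b.+1%:Z :: sx a (a%:Z - b.+1%:Z - 1))) (iota 0 (a.+1 + b.+1)).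
  rewrite syS.
  congr (Dt (RW x y (rcons _ _) (_ :: sx _ _)) (iota _ _)); rewrite /q; lia.
have eD24 : Dt (RW x y (rcons (sy b 1) ((2 * b)%:Z + 3)) (q :: sx a (q - 2))) (iota 0 (a + b + 2))
    = Dt (RW x y (rcons (sy b 1) ((2 * b)%:Z + 3)) (sx a.+1 (a.+1%:Z - b.+1%:Z))) (iota 0 (a.+1 + b.+1)).
  rewrite sxS.
  congr (Dt (RW x y (rcons _ _) (_ :: sx _ _)) (iota _ _)); rewrite /q; lia.
have eD14 : Dt (RW x y (rcons (sy b 1) ((2 * b)%:Z + 1)) (q :: sx a (q - 2))) (iota 0 (a + b + 2))
    = Dt (RW x y (sy b.+1 1) (sx a.+1 (a.+1%:Z - b.+1%:Z))) (iota 0 (a.+1 + b.+1)).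
  rewrite syS sxS.
  congr (Dt (RW x y (rcons _ _) (_ :: sx _ _)) (iota _ _)); rewrite /q; lia.
have eD23 : Dt (RW x y (rcons (sy b 1) ((2 * b)%:Z + 3)) (q + 2 :: sx a (q - 2))) (iota 0 (a + b + 2))
    = Dt (RW x y (rcons (sy b 1) ((2 * b)%:Z + 3)) (a%:Z + 3 - b.+1%:Z :: sx a (a%:Z - b.+1%:Z - 1))) (iota 0 (a.+1 + b.+1)).
  congr (Dt (RW x y (rcons _ _) (_ :: sx _ _)) (iota _ _)); rewrite /q; lia.
rewrite eD12 eD34 eD13 eD24 eD14 eD23 in P.
by apply: etrans P; ring.
Qed.
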